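(* Under the standing assumptions, $G$ does not contain a vertex $v$ of degree $8$ together with pairwise distinct neighbours $x,u,y,z,w,t$ of $v$ and a vertex $p\notin\{v,x,u,y,z,w,t\}$ such that $xu,uy,zw,wt\in E(G)$, $p$ is adjacent to both $y$ and $z$, and $d(x)=d(y)=d(z)=d(t)=3$.
   Context: Standing assumptions: A total $9$-coloring of a graph is an assignment of colors from $\{1,\dots,9\}$ to the vertices and edges such that adjacent vertices, edges sharing an endpoint, and a vertex and an incident edge receive different colors. A $4$-fan is the graph on six vertices $c,u_1,\dots,u_5$ with edges $cu_j$ ($1\le j\le5$) and $u_ju_{j+1}$ ($1\le j\le4$). $G$ is a minimal counterexample: $G$ is a simple planar graph with maximum degree $8$, containing no subgraph isomorphic to a $4$-fan, that has no total $9$-coloring, and such that every simple planar graph $H$ with maximum degree at most $8$, no subgraph isomorphic to a $4$-fan, and $|V(H)|+|E(H)|<|V(G)|+|E(G)|$ has a total $9$-coloring. $d(\cdot)$ denotes degree in $G$. *)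

(* Defs.v *)
From Stdlib Require Import Reals.
From mathcomp Require Import all_boot.

Set Implicit Arguments.
Unset Strict Implicit.
Unset Printing Implicit Defensive.

Section Drawing.
Local Open Scope R_scope.

Definition pt := (R * R)%type.

Definition dist_pt (a b : pt) : R := Rmax (Rabs (fst a - fst b)) (Rabs (snd a - snd b)).

Definition in01 (t : R) : Prop := 0 <= t <= 1.
Definition open01 (t : R) : Prop := 0 < t < 1.

Definition cont01 (gamma : R -> pt) : Prop :=
  forall t, in01 t -> forall eps, 0 < eps -> exists delta, 0 < delta /\
    forall s, in01 s -> Rabs (s - t) < delta -> dist_pt (gamma s) (gamma t) < eps.

Definition jordan_arc (gamma : R -> pt) (a b : pt) : Prop :=
  cont01 gamma /\ (forall s t, in01 s -> in01 t -> gamma s = gamma t -> s = t)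
  /\ gamma 0 = a /\ gamma 1 = b.

End Drawing.

Definition simple_graph (T : finType) (adj : rel T) : Prop :=
  (forall x, ~~ adj x x) /\ (forall x y, adj x y = adj y x).

Definition planar (T : finType) (adj : rel T) : Prop :=
  exists (pos : T -> pt) (arc : T -> T -> R -> pt),
    (forall x y, pos x = pos y -> x = y) /\
    (forall x y, adj x y -> jordan_arc (arc x y) (pos x) (pos y)) /\
    (forall x y z t, adj x y -> open01 t -> arc x y t <> pos z) /\
    (forall x y x' y', adj x y -> adj x' y' -> [set x; y] != [set x'; y'] :> {set T} ->
       forall s t, open01 s -> open01 t -> arc x y s <> arc x' y' t).

Definition deg (T : finType) (adj : rel T) (x : T) : nat := #|[set y | adj x y]|.

Definition edge_set (T : finType) (adj : rel T) : {set {set T}} :=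
  [set e : {set T} | [exists x, exists y, adj x y && (e == [set x; y])]].

Definition gsize (T : finType) (adj : rel T) : nat := #|T| + #|edge_set adj|.

Definition maxdeg_le (T : finType) (adj : rel T) (k : nat) : Prop :=
  forall x, deg adj x <= k.

Definition maxdeg_eq (T : finType) (adj : rel T) (k : nat) : Prop :=
  maxdeg_le adj k /\ exists x, deg adj x = k.

(* G contains a subgraph isomorphic to the 4-fan c,u1..u5 (not necessarily induced) *)
Definition has_4fan (T : finType) (adj : rel T) : Prop :=
  exists (c u1 u2 u3 u4 u5 : T),
    uniq [:: c; u1; u2; u3; u4; u5] /\
    adj c u1 /\ adj c u2 /\ adj c u3 /\ adj c u4 /\ adj c u5 /\
    adj u1 u2 /\ adj u2 u3 /\ adj u3 u4 /\ adj u4 u5.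

(* vertex colours f, edge colours g (g x y is the colour of edge xy, g symmetric on edges) *)
Definition total_coloring (T : finType) (adj : rel T) (k : nat)
    (f : T -> 'I_k) (g : T -> T -> 'I_k) : Prop :=
  (forall x y, adj x y -> g x y = g y x) /\
  (forall x y, adj x y -> f x != f y) /\
  (forall x y, adj x y -> f x != g x y) /\
  (forall x y z, adj x y -> adj x z -> y != z -> g x y != g x z).

Definition total_colorable (T : finType) (adj : rel T) (k : nat) : Prop :=
  exists f g, @total_coloring T adj k f g.

Definition minimal_counterexample (T : finType) (adj : rel T) : Prop :=
  simple_graph adj /\ planar adj /\ maxdeg_eq adj 8 /\ ~ has_4fan adj /\
  ~ total_colorable adj 9 /\
  (forall (T' : finType) (adj' : rel T'),
     simple_graph adj' -> planar adj' -> maxdeg_le adj' 8 -> ~ has_4fan adj' ->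
     gsize adj' < gsize adj -> total_colorable adj' 9).

(* Main.v *)
Require Import Defs.
From mathcomp Require Import all_boot.
Set Implicit Arguments.
Unset Strict Implicit.
Ltac norm := repeat match goal with
 | H : is_true (_ && _) |- _ => let H1 := fresh "H" in let H2 := fresh "H" in case/andP: H => H1 H2
 | H : is_true (~~ (_ || _)) |- _ => rewrite negb_or in H
 | H : is_true (uniq _) |- _ => rewrite /= ?inE in H
 | H : is_true true |- _ => clear H
 | H : is_true (~~ (?x == ?y)) |- _ =>
   let N1 := fresh "N" in let N2 := fresh "N" in
   assert (N1 : (x == y) = false) by exact (negbTE H);
   assert (N2 : (y == x) = false) by (rewrite eq_sym; exact (negbTE H));
   clear H
 end.

Ltac close := rewrite /= ?inE; repeat match goal with N : (?x == ?y) = false |- context [?x == ?y] => rewrite N end; rewrite ?eqxx /=; done.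
Ltac contra_tac := match goal with N : (?x == ?x) = false |- _ => rewrite eqxx in N end.


Lemma local_sol (K : eqType) (a sx su sz sw st xu yu yp zp zw tw fx ft : K) :
  uniq [:: a; sx; su; sz; sw; st] -> uniq [:: su; xu; yu] -> uniq [:: sw; zw; tw] ->
  yp != zp -> uniq [:: sx; xu; fx] -> yu != yp -> uniq [:: sz; zp; zw] ->
  uniq [:: st; tw; ft] ->
  exists vx vy vz vt vu vw nxu nyu nzw ntw nyp nzp : K,
    uniq [:: vx; vu; vy; vz; vw; vt] &&
    all (mem [:: a; sx; su; sz; sw; st]) [:: vx; vu; vy; vz; vw; vt] &&
    uniq [:: vu; nxu; nyu] && all (mem [:: su; xu; yu]) [:: vu; nxu; nyu] &&
    uniq [:: vw; nzw; ntw] && all (mem [:: sw; zw; tw]) [:: vw; nzw; ntw] &&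
    uniq [:: nyp; nzp] && all (mem [:: yp; zp]) [:: nyp; nzp] &&
    uniq [:: vx; nxu; fx] && uniq [:: vy; nyu; nyp] &&
    uniq [:: vz; nzp; nzw] && uniq [:: vt; ntw; ft].
Proof.
  move=> *; norm.
  case: (eqVneq a yu) => E.
  - subst yu.
    case: (eqVneq a fx) => E.
    - subst fx.
      case: (eqVneq su yp) => E.
      - subst yp.
        case: (eqVneq su zw) => E.
        - subst zw.
          case: (eqVneq a zp) => E.
          - subst zp.
            by exists sw , sx , sz , st , a , su , su , xu , sw , tw , su , a; close.
          - norm.
            by exists sx , sz , a , st , su , sw , xu , a , su , tw , su , zp; close.
        - norm.
          by exists sz , sx , su , st , a , sw , su , xu , zw , tw , su , zp; close.
      - norm.
        case: (eqVneq xu yp) => E.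
        - subst yp.
          by exists su , sx , sz , st , a , sw , xu , su , zw , tw , xu , zp; close.
        - norm.
          by exists sx , su , sz , st , a , sw , su , xu , zw , tw , yp , zp; close.
    - norm.
      case: (eqVneq sx yp) => E.
      - subst yp.
        by exists sx , a , sz , st , su , sw , a , xu , zw , tw , sx , zp; close.
      - norm.
        by exists a , sx , sz , st , su , sw , xu , a , zw , tw , yp , zp; close.
  - norm.
    case: (eqVneq a yp) => E.
    - subst yp.
      case: (eqVneq sz yu) => E.
      - subst yu.
        case: (eqVneq a zw) => E.
        - subst zw.
          case: (eqVneq a ft) => E.
          - subst ft.
            case: (eqVneq zp sw) => E.
            - subst sw.
              by exists sx , st , sz , zp , su , a , xu , sz , zp , tw , zp , a; close.
            - norm.
              by exists sx , sw , sz , st , su , a , xu , sz , sw , tw , a , zp; close.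
          - norm.
            by exists sx , st , sz , a , su , sw , xu , sz , a , tw , a , zp; close.
        - norm.
          by exists sx , a , sz , st , su , sw , xu , sz , zw , tw , zp , a; close.
      - norm.
        case: (eqVneq a zw) => E.
        - subst zw.
          case: (eqVneq st zp) => E.
          - subst zp.
            case: (eqVneq a ft) => E.
            - subst ft.
              by exists sx , sz , sw , st , su , a , xu , yu , tw , sw , a , st; close.
            - norm.
              by exists sx , sz , a , st , su , sw , xu , yu , tw , a , a , st; close.
          - norm.
            case: (eqVneq a ft) => E.
            - subst ft.
              case: (eqVneq zp sw) => E.
              - subst sw.
                case: (eqVneq yu zp) => E.
                - subst zp.
                  by exists sx , sz , su , st , yu , a , xu , su , yu , tw , yu , a; close.
                - norm.
                  by exists sx , sz , st , zp , su , a , xu , yu , zp , tw , zp , a; close.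
              - norm.
                by exists sx , sz , st , sw , su , a , xu , yu , sw , tw , a , zp; close.
            - norm.
              by exists sx , sz , st , a , su , sw , xu , yu , a , tw , a , zp; close.
        - norm.
          by exists sx , sz , a , st , su , sw , xu , yu , zw , tw , a , zp; close.
    - norm.
      by exists sx , a , sz , st , su , sw , xu , yu , zw , tw , yp , zp; close.
Qed.
Unset Printing Implicit Defensive.

Lemma set2eq (T : finType) (a b c d : T) :
  ([set a; b] == [set c; d]) = ((a == c) && (b == d)) || ((a == d) && (b == c)).
Proof.
apply/idP/idP.
- move/eqP/setP=> E.
  have ha := E a; have hb := E b; have hd := E d; have hc := E c.
  rewrite !inE !eqxx ?orbT in ha hb hc hd.
  move/esym: ha => /orP [] /eqP Ha; subst a; move/esym: hb => /orP [] /eqP Hb; subst b;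
   move: hc hd; rewrite ?eqxx ?orbT ?orbF ?andbT /= ?orbb //;
   first [ by move=> _ /esym ->
         | by move=> /esym ->
         | by move=> _ /esym; rewrite eq_sym => ->
         | by move=> /esym; rewrite eq_sym => ->
         | by move=> _; rewrite eq_sym
         | by move=> ? _; rewrite eq_sym ].
- case/orP => /andP [] /eqP Ha /eqP Hb; subst a b; apply/eqP => //; exact: setUC.
Qed.

Lemma free_color (X : {set 'I_9}) : #|X| < 9 -> exists c, c \notin X.
Proof.
move=> H; case: (pickP [pred c | c \notin X]) => [c Hc|H0]; first by exists c.
have EX : X = setT by apply/setP=> c; rewrite inE; have := H0 c => /= /negbFE.
by move: H; rewrite EX cardsT card_ord.
Qed.

Section Gen.
Variables (T : finType) (adj : rel T).
Hypothesis irr : forall a, ~~ adj a a.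
Hypothesis sym : forall a b, adj a b = adj b a.

Definition good_except (S : seq T) (f : T -> 'I_9) (g : T -> T -> 'I_9) : Prop :=
  (forall a b, adj a b -> g a b = g b a) /\
  (forall a b, adj a b -> a \notin S -> b \notin S -> f a != f b) /\
  (forall a b, adj a b -> a \notin S -> f a != g a b) /\
  (forall a b c, adj a b -> adj a c -> b != c -> g a b != g a c).

Lemma recolor q S f g : deg adj q = 3 -> good_except (q :: S) f g ->
  exists f', good_except S f' g.
Proof.
move=> dq [G1 [G2 [G3 G4]]].
set N := [set b | adj q b].
have cN : #|N| = 3 by [].
have : #|(f @: N) :|: (g q @: N)| < 9.
  apply: (leq_ltn_trans (leq_card_setU _ _)).
  have h1 := leq_imset_card f N; have h2 := leq_imset_card (g q) N.
  by rewrite cN in h1 h2; apply: (leq_ltn_trans (leq_add h1 h2)).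
case/free_color => c; rewrite in_setU negb_or => /andP [cf cg].
exists (fun a => if a == q then c else f a); split=> //; split; last split=> //.
- move=> a b ab aS bS.
  case: (eqVneq a q) => [Eq|aq].
  + subst a; have bq : (b == q) = false by apply/negbTE/eqP => E; move: ab; rewrite E (negbTE (irr q)).
    rewrite /= ?eqxx bq; apply: contraNneq cf => ->; apply: imset_f; by rewrite inE.
  + case: (eqVneq b q) => [Eq|bq].
    * subst b; apply: contraNneq cf => <-; apply: imset_f; by rewrite inE sym.
    * by apply: G2 => //; rewrite inE negb_or ?aq ?bq.
- move=> a b ab aS.
  case: (eqVneq a q) => [Eq|aq].
  + subst a; apply: contraNneq cg => ->; apply: imset_f; by rewrite inE.
  + by apply: G3 => //; rewrite inE negb_or aq.
Qed.

Lemma good_total f g : good_except [::] f g -> total_coloring adj f g.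
Proof.
move=> [G1 [G2 [G3 G4]]]; split=> //; split; last split=> //.
- by move=> a b ab; apply: G2.
- by move=> a b ab; apply: G3.
Qed.

End Gen.

Definition adjd (T : finType) (adj : rel T) (v y : T) : rel T :=
  fun a b => adj a b && ([set a; b] != [set v; y]).

Lemma del_colorable (T : finType) (adj : rel T) (v y : T) :
  minimal_counterexample adj -> adj v y -> total_colorable (adjd adj v y) 9.
Proof.
move=> [[irr sym] [pl [[md _] [nof [_ mini]]]]] vy.
have sub : forall a b, adjd adj v y a b -> adj a b by move=> a b /andP [].
apply: mini.
- split=> [a|a b]; first by rewrite /adjd (negbTE (irr a)).
  by rewrite /adjd sym setUC.
- case: pl => pos [arc [P1 [P2 [P3 P4]]]].
  exists pos, arc; split=> //; split; last split.
  + by move=> a b /sub; apply: P2.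
  + by move=> a b c s /sub; apply: P3.
  + by move=> a b a' b' /sub ab /sub ab'; apply: P4.
- move=> a; apply: leq_trans (md a); apply: subset_leq_card.
  by apply/subsetP=> b; rewrite !inE => /sub.
- move=> [c [u1 [u2 [u3 [u4 [u5 [U [h1 [h2 [h3 [h4 [h5 [h6 [h7 [h8 h9]]]]]]]]]]]]]]].
  apply: nof; exists c, u1, u2, u3, u4, u5; do 9 (split; first by (try apply: sub)).
  exact: sub h9.
- rewrite /gsize ltn_add2l; apply: proper_card; apply/properP; split.
  + apply/subsetP=> e; rewrite !inE => /existsP [a /existsP [b /andP [/sub ab E]]].
    by apply/existsP; exists a; apply/existsP; exists b; rewrite ab.
  + exists [set v; y].
    * by rewrite inE; apply/existsP; exists v; apply/existsP; exists y; rewrite vy eqxx.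
    * rewrite inE; apply/negP => /existsP [a /existsP [b /andP [/andP [_ ne] /eqP E]]].
      by rewrite E eqxx in ne.
Qed.

Lemma nb3 (T : finType) (adj : rel T) q a b : deg adj q = 3 -> adj q a -> adj q b -> a != b ->
  exists c, [/\ adj q c, c != a, c != b & forall d, adj q d -> [|| d == a, d == b | d == c]].
Proof.
move=> dq qa qb ab.
set N := [set d | adj q d].
have cN : #|N| = 3 by [].
have : #|N :\ a :\ b| = 1.
  have aN : a \in N by rewrite inE.
  have bN : b \in N :\ a by rewrite !inE qb eq_sym ab.
  by move: cN; rewrite (cardsD1 a N) aN (cardsD1 b (N :\ a)) bN => [[]].
move/eqP/cards1P=> [c Ec].
have : c \in N :\ a :\ b by rewrite Ec set11.
rewrite !inE => /and3P [cb ca qc].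
exists c; split=> // d qd.
case: (eqVneq d a) => //= da; case: (eqVneq d b) => //= db.
have : d \in N :\ a :\ b by rewrite !inE da db qd.
by rewrite Ec inE.
Qed.

Lemma vtx_gen (T : finType) (adjx : rel T) (h g0 : T -> T -> 'I_9) (a : T) (L : seq T) (vals : seq 'I_9) :
  uniq L -> uniq vals -> size vals = size L ->
  (forall i, i < size L -> h a (nth a L i) = nth ord0 vals i) ->
  (forall c, c \notin L -> adjx a c -> h a c = g0 a c) ->
  (forall i c, i < size L -> c \notin L -> adjx a c -> nth ord0 vals i != g0 a c) ->
  (forall c d, c \notin L -> d \notin L -> adjx a c -> adjx a d -> c != d -> g0 a c != g0 a d) ->
  forall b c, adjx a b -> adjx a c -> b != c -> h a b != h a c.
Proof.
move=> uL uV sV Hin Hout Hmix Hold b c ab ac bc.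
have key : forall e, e \in L -> h a e = nth ord0 vals (index e L).
  by move=> e eL; rewrite -{1}(nth_index a eL) Hin // index_mem.
case: (boolP (b \in L)) => bL; case: (boolP (c \in L)) => cL.
- rewrite !key // nth_uniq ?sV ?index_mem //.
  by apply: contra bc => /eqP E; rewrite -(nth_index a bL) -(nth_index a cL) E.
- by rewrite key // (Hout c) // Hmix // index_mem.
- by rewrite eq_sym key // (Hout b) // Hmix // index_mem.
- by rewrite !Hout //; apply: Hold.
Qed.

Lemma vtx_fe (T : finType) (adjx : rel T) (h g0 : T -> T -> 'I_9) (a : T) (L : seq T) (vals : seq 'I_9) (fa : 'I_9) :
  (forall i, i < size L -> h a (nth a L i) = nth ord0 vals i) ->
  (forall c, c \notin L -> adjx a c -> h a c = g0 a c) ->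
  (forall i, i < size L -> nth ord0 vals i != fa) ->
  (forall c, c \notin L -> adjx a c -> fa != g0 a c) ->
  forall b, adjx a b -> fa != h a b.
Proof.
move=> Hin Hout Hv Hold b ab.
case: (boolP (b \in L)) => bL.
- by rewrite -(nth_index a bL) Hin ?index_mem // eq_sym Hv // index_mem.
- by rewrite Hout // Hold.
Qed.

Section Ext.
Variables (T : finType) (adj : rel T).
Hypothesis irr : forall a, ~~ adj a a.
Hypothesis sym : forall a b, adj a b = adj b a.
Variables v x u y z w t p : T.
Hypothesis U6 : uniq [:: x; u; y; z; w; t].
Hypotheses (avx : adj v x) (avu : adj v u) (avy : adj v y) (avz : adj v z) (avw : adj v w) (avt : adj v t).
Hypothesis pn : p \notin [:: v; x; u; y; z; w; t].
Hypotheses (axu : adj x u) (auy : adj u y) (azw : adj z w) (awt : adj w t) (apy : adj p y) (apz : adj p z).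

Lemma dist : uniq [:: v; x; u; y; z; w; t; p].
Proof.
have vq : forall q, adj v q -> v != q.
  by move=> q avq; apply/eqP => E; move: avq; rewrite -E (negbTE (irr v)).
have vn : v \notin [:: x; u; y; z; w; t].
  by rewrite !inE !negb_or !vq.
have -> : [:: v; x; u; y; z; w; t; p] = rcons [:: v; x; u; y; z; w; t] p by [].
by rewrite rcons_uniq pn /= -/(uniq [:: x; u; y; z; w; t]) U6 andbT; move: vn; rewrite !inE.
Qed.
Lemma n_v_x : (v == x) = false.
Proof. by move: dist; rewrite /= !inE; case: (v == x) => //; rewrite /= ?orbT /= ?andbF. Qed.
Lemma n_x_v : (x == v) = false.
Proof. by rewrite eq_sym n_v_x. Qed.
Lemma n_v_u : (v == u) = false.
Proof. by move: dist; rewrite /= !inE; case: (v == u) => //; rewrite /= ?orbT /= ?andbF. Qed.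
Lemma n_u_v : (u == v) = false.
Proof. by rewrite eq_sym n_v_u. Qed.
Lemma n_v_y : (v == y) = false.
Proof. by move: dist; rewrite /= !inE; case: (v == y) => //; rewrite /= ?orbT /= ?andbF. Qed.
Lemma n_y_v : (y == v) = false.
Proof. by rewrite eq_sym n_v_y. Qed.
Lemma n_v_z : (v == z) = false.
Proof. by move: dist; rewrite /= !inE; case: (v == z) => //; rewrite /= ?orbT /= ?andbF. Qed.
Lemma n_z_v : (z == v) = false.
Proof. by rewrite eq_sym n_v_z. Qed.
Lemma n_v_w : (v == w) = false.
Proof. by move: dist; rewrite /= !inE; case: (v == w) => //; rewrite /= ?orbT /= ?andbF. Qed.
Lemma n_w_v : (w == v) = false.
Proof. by rewrite eq_sym n_v_w. Qed.
Lemma n_v_t : (v == t) = false.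
Proof. by move: dist; rewrite /= !inE; case: (v == t) => //; rewrite /= ?orbT /= ?andbF. Qed.
Lemma n_t_v : (t == v) = false.
Proof. by rewrite eq_sym n_v_t. Qed.
Lemma n_v_p : (v == p) = false.
Proof. by move: dist; rewrite /= !inE; case: (v == p) => //; rewrite /= ?orbT /= ?andbF. Qed.
Lemma n_p_v : (p == v) = false.
Proof. by rewrite eq_sym n_v_p. Qed.
Lemma n_x_u : (x == u) = false.
Proof. by move: dist; rewrite /= !inE; case: (x == u) => //; rewrite /= ?orbT /= ?andbF. Qed.
Lemma n_u_x : (u == x) = false.
Proof. by rewrite eq_sym n_x_u. Qed.
Lemma n_x_y : (x == y) = false.
Proof. by move: dist; rewrite /= !inE; case: (x == y) => //; rewrite /= ?orbT /= ?andbF. Qed.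
Lemma n_y_x : (y == x) = false.
Proof. by rewrite eq_sym n_x_y. Qed.
Lemma n_x_z : (x == z) = false.
Proof. by move: dist; rewrite /= !inE; case: (x == z) => //; rewrite /= ?orbT /= ?andbF. Qed.
Lemma n_z_x : (z == x) = false.
Proof. by rewrite eq_sym n_x_z. Qed.
Lemma n_x_w : (x == w) = false.
Proof. by move: dist; rewrite /= !inE; case: (x == w) => //; rewrite /= ?orbT /= ?andbF. Qed.
Lemma n_w_x : (w == x) = false.
Proof. by rewrite eq_sym n_x_w. Qed.
Lemma n_x_t : (x == t) = false.
Proof. by move: dist; rewrite /= !inE; case: (x == t) => //; rewrite /= ?orbT /= ?andbF. Qed.
Lemma n_t_x : (t == x) = false.
Proof. by rewrite eq_sym n_x_t. Qed.
Lemma n_x_p : (x == p) = false.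
Proof. by move: dist; rewrite /= !inE; case: (x == p) => //; rewrite /= ?orbT /= ?andbF. Qed.
Lemma n_p_x : (p == x) = false.
Proof. by rewrite eq_sym n_x_p. Qed.
Lemma n_u_y : (u == y) = false.
Proof. by move: dist; rewrite /= !inE; case: (u == y) => //; rewrite /= ?orbT /= ?andbF. Qed.
Lemma n_y_u : (y == u) = false.
Proof. by rewrite eq_sym n_u_y. Qed.
Lemma n_u_z : (u == z) = false.
Proof. by move: dist; rewrite /= !inE; case: (u == z) => //; rewrite /= ?orbT /= ?andbF. Qed.
Lemma n_z_u : (z == u) = false.
Proof. by rewrite eq_sym n_u_z. Qed.
Lemma n_u_w : (u == w) = false.
Proof. by move: dist; rewrite /= !inE; case: (u == w) => //; rewrite /= ?orbT /= ?andbF. Qed.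
Lemma n_w_u : (w == u) = false.
Proof. by rewrite eq_sym n_u_w. Qed.
Lemma n_u_t : (u == t) = false.
Proof. by move: dist; rewrite /= !inE; case: (u == t) => //; rewrite /= ?orbT /= ?andbF. Qed.
Lemma n_t_u : (t == u) = false.
Proof. by rewrite eq_sym n_u_t. Qed.
Lemma n_u_p : (u == p) = false.
Proof. by move: dist; rewrite /= !inE; case: (u == p) => //; rewrite /= ?orbT /= ?andbF. Qed.
Lemma n_p_u : (p == u) = false.
Proof. by rewrite eq_sym n_u_p. Qed.
Lemma n_y_z : (y == z) = false.
Proof. by move: dist; rewrite /= !inE; case: (y == z) => //; rewrite /= ?orbT /= ?andbF. Qed.
Lemma n_z_y : (z == y) = false.
Proof. by rewrite eq_sym n_y_z. Qed.
Lemma n_y_w : (y == w) = false.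
Proof. by move: dist; rewrite /= !inE; case: (y == w) => //; rewrite /= ?orbT /= ?andbF. Qed.
Lemma n_w_y : (w == y) = false.
Proof. by rewrite eq_sym n_y_w. Qed.
Lemma n_y_t : (y == t) = false.
Proof. by move: dist; rewrite /= !inE; case: (y == t) => //; rewrite /= ?orbT /= ?andbF. Qed.
Lemma n_t_y : (t == y) = false.
Proof. by rewrite eq_sym n_y_t. Qed.
Lemma n_y_p : (y == p) = false.
Proof. by move: dist; rewrite /= !inE; case: (y == p) => //; rewrite /= ?orbT /= ?andbF. Qed.
Lemma n_p_y : (p == y) = false.
Proof. by rewrite eq_sym n_y_p. Qed.
Lemma n_z_w : (z == w) = false.
Proof. by move: dist; rewrite /= !inE; case: (z == w) => //; rewrite /= ?orbT /= ?andbF. Qed.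
Lemma n_w_z : (w == z) = false.
Proof. by rewrite eq_sym n_z_w. Qed.
Lemma n_z_t : (z == t) = false.
Proof. by move: dist; rewrite /= !inE; case: (z == t) => //; rewrite /= ?orbT /= ?andbF. Qed.
Lemma n_t_z : (t == z) = false.
Proof. by rewrite eq_sym n_z_t. Qed.
Lemma n_z_p : (z == p) = false.
Proof. by move: dist; rewrite /= !inE; case: (z == p) => //; rewrite /= ?orbT /= ?andbF. Qed.
Lemma n_p_z : (p == z) = false.
Proof. by rewrite eq_sym n_z_p. Qed.
Lemma n_w_t : (w == t) = false.
Proof. by move: dist; rewrite /= !inE; case: (w == t) => //; rewrite /= ?orbT /= ?andbF. Qed.
Lemma n_t_w : (t == w) = false.
Proof. by rewrite eq_sym n_w_t. Qed.
Lemma n_w_p : (w == p) = false.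
Proof. by move: dist; rewrite /= !inE; case: (w == p) => //; rewrite /= ?orbT /= ?andbF. Qed.
Lemma n_p_w : (p == w) = false.
Proof. by rewrite eq_sym n_w_p. Qed.
Lemma n_t_p : (t == p) = false.
Proof. by move: dist; rewrite /= !inE; case: (t == p) => //; rewrite /= ?orbT /= ?andbF. Qed.
Lemma n_p_t : (p == t) = false.
Proof. by rewrite eq_sym n_t_p. Qed.

Hypotheses (dx : deg adj x = 3) (dy : deg adj y = 3) (dz : deg adj z = 3) (dt : deg adj t = 3) (dv : deg adj v = 8).
Variables (f : T -> 'I_9) (g : T -> T -> 'I_9).
Hypothesis col : total_coloring (adjd adj v y) f g.

Ltac dis := rewrite ?n_v_x ?n_x_v ?n_v_u ?n_u_v ?n_v_y ?n_y_v ?n_v_z ?n_z_v ?n_v_w ?n_w_v ?n_v_t ?n_t_v ?n_v_p ?n_p_v ?n_x_u ?n_u_x ?n_x_y ?n_y_x ?n_x_z ?n_z_x ?n_x_w ?n_w_x ?n_x_t ?n_t_x ?n_x_p ?n_p_x ?n_u_y ?n_y_u ?n_u_z ?n_z_u ?n_u_w ?n_w_u ?n_u_t ?n_t_u ?n_u_p ?n_p_u ?n_y_z ?n_z_y ?n_y_w ?n_w_y ?n_y_t ?n_t_y ?n_y_p ?n_p_y ?n_z_w ?n_w_z ?n_z_t ?n_t_z ?n_z_p ?n_p_z ?n_w_t ?n_t_w ?n_w_p ?n_p_w ?n_t_p ?n_p_t; repeat match goal with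
  | H : is_true (~~ (?a == ?b)) |- context [?a == ?b] => rewrite (negbTE H)
  | H : is_true (~~ (?a == ?b)) |- context [?b == ?a] => rewrite [b == a]eq_sym (negbTE H)
  end.

Lemma adjd_of a b : adj a b -> ~~ (((a == v) && (b == y)) || ((a == y) && (b == v))) -> adjd adj v y a b.
Proof. by move=> ab H; rewrite /adjd set2eq ab. Qed.

Ltac ad := apply: adjd_of; [first [assumption | rewrite sym; assumption] | rewrite ?eqxx; dis; rewrite /= ?andbF //].

Lemma cs a b : adjd adj v y a b -> g a b = g b a. Proof. by case: col => H _; apply: H. Qed.
Lemma cvv a b : adjd adj v y a b -> f a != f b. Proof. by case: col => _ [H _]; apply: H. Qed.
Lemma cve a b : adjd adj v y a b -> f a != g a b. Proof. by case: col => _ [_ [H _]]; apply: H. Qed.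
Lemma cee a b c : adjd adj v y a b -> adjd adj v y a c -> b != c -> g a b != g a c.
Proof. by case: col => _ [_ [_ H]]; apply: H. Qed.

Lemma uniq_gs a s : all (adjd adj v y a) s -> uniq s -> uniq (map (g a) s).
Proof.
move=> As us; rewrite map_inj_in_uniq // => b c bs cs' E.
case: (eqVneq b c) => // bc.
have := cee (allP As b bs) (allP As c cs') bc; by rewrite E eqxx.
Qed.

Lemma free_v : exists al, al != f v /\ forall r, adjd adj v y v r -> al != g v r.
Proof.
set N := [set r | adjd adj v y v r].
have sN : N \subset [set r | adj v r] :\ y.
  apply/subsetP => r; rewrite !inE => /andP [vr ne]; rewrite vr andbT.
  by apply: contraNneq ne => ->; rewrite eqxx.
have cN : #|N| <= 7.
  apply: (leq_trans (subset_leq_card sN)).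
  by have := dv; rewrite /deg (cardsD1 y) inE avy add1n => -[->].
have : #|f v |: (g v @: N)| < 9.
  rewrite cardsU1; apply: (leq_ltn_trans (leq_add (leq_b1 _) (leq_imset_card _ _))).
  by rewrite add1n ltnS.
case/free_color => al; rewrite in_setU1 negb_or => /andP [a1 a2].
exists al; split => // r vr; apply: contraNneq a2 => ->; apply: imset_f; by rewrite inE.
Qed.

Section New.
Variables (al : 'I_9) (x' t' : T).
Hypotheses (Hal : al != f v) (Hal2 : forall r, adjd adj v y v r -> al != g v r).
Hypotheses (axx : adj x x') (Nx : forall d, adj x d -> [|| d == v, d == u | d == x']).
Hypotheses (att : adj t t') (Nt : forall d, adj t d -> [|| d == v, d == w | d == t']).
Hypotheses (Ny : forall d, adj y d -> [|| d == v, d == u | d == p]).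
Hypotheses (Nz : forall d, adj z d -> [|| d == v, d == w | d == p]).
Variables nvx nvy nvz nvt nvu nvw nxu nyu nzw ntw nyp nzp : 'I_9.
Hypothesis C1 : uniq [:: nvx; nvu; nvy; nvz; nvw; nvt].
Hypothesis C2 : all (mem [:: al; g v x; g v u; g v z; g v w; g v t]) [:: nvx; nvu; nvy; nvz; nvw; nvt].
Hypothesis C3 : uniq [:: nvu; nxu; nyu].
Hypothesis C4 : all (mem [:: g v u; g u x; g u y]) [:: nvu; nxu; nyu].
Hypothesis C5 : uniq [:: nvw; nzw; ntw].
Hypothesis C6 : all (mem [:: g v w; g w z; g w t]) [:: nvw; nzw; ntw].
Hypothesis C7 : uniq [:: nyp; nzp].
Hypothesis C8 : all (mem [:: g p y; g p z]) [:: nyp; nzp].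
Hypothesis C9 : uniq [:: nvx; nxu; g x x'].
Hypothesis C10 : uniq [:: nvy; nyu; nyp].
Hypothesis C11 : uniq [:: nvz; nzp; nzw].
Hypothesis C12 : uniq [:: nvt; ntw; g t t'].

Ltac nfacts := repeat match goal with
  | H : is_true (~~ (_ || _)) |- _ => rewrite negb_or in H
  | H : is_true (_ && _) |- _ => let H1 := fresh "c" in let H2 := fresh "c" in case/andP: H => H1 H2
  end.

Lemma C4' : all (mem [:: g u v; g u x; g u y]) [:: nvu; nxu; nyu].
Proof. by rewrite -(@cs v u) //; ad. Qed.
Lemma C6' : all (mem [:: g w v; g w z; g w t]) [:: nvw; nzw; ntw].
Proof. by rewrite -(@cs v w) //; ad. Qed.

Definition G2 (E : {set T}) (d : 'I_9) : 'I_9 :=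
  if E == [set v; x] then nvx else
  if E == [set v; u] then nvu else
  if E == [set v; y] then nvy else
  if E == [set v; z] then nvz else
  if E == [set v; w] then nvw else
  if E == [set v; t] then nvt else
  if E == [set u; x] then nxu else
  if E == [set u; y] then nyu else
  if E == [set w; z] then nzw else
  if E == [set w; t] then ntw else
  if E == [set p; y] then nyp else
  if E == [set p; z] then nzp else
  d.
Definition g2 (a b : T) : 'I_9 := G2 [set a; b] (g a b).
Lemma g2_v_x : g2 v x = nvx.
Proof. by rewrite /g2 /G2 !set2eq ?eqxx; dis. Qed.
Lemma g2_v_u : g2 v u = nvu.
Proof. by rewrite /g2 /G2 !set2eq ?eqxx; dis. Qed.
Lemma g2_v_y : g2 v y = nvy.
Proof. by rewrite /g2 /G2 !set2eq ?eqxx; dis. Qed.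
Lemma g2_v_z : g2 v z = nvz.
Proof. by rewrite /g2 /G2 !set2eq ?eqxx; dis. Qed.
Lemma g2_v_w : g2 v w = nvw.
Proof. by rewrite /g2 /G2 !set2eq ?eqxx; dis. Qed.
Lemma g2_v_t : g2 v t = nvt.
Proof. by rewrite /g2 /G2 !set2eq ?eqxx; dis. Qed.
Lemma g2_x_v : g2 x v = nvx.
Proof. by rewrite /g2 /G2 !set2eq ?eqxx; dis. Qed.
Lemma g2_x_u : g2 x u = nxu.
Proof. by rewrite /g2 /G2 !set2eq ?eqxx; dis. Qed.
Lemma g2_u_v : g2 u v = nvu.
Proof. by rewrite /g2 /G2 !set2eq ?eqxx; dis. Qed.
Lemma g2_u_x : g2 u x = nxu.
Proof. by rewrite /g2 /G2 !set2eq ?eqxx; dis. Qed.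
Lemma g2_u_y : g2 u y = nyu.
Proof. by rewrite /g2 /G2 !set2eq ?eqxx; dis. Qed.
Lemma g2_y_v : g2 y v = nvy.
Proof. by rewrite /g2 /G2 !set2eq ?eqxx; dis. Qed.
Lemma g2_y_u : g2 y u = nyu.
Proof. by rewrite /g2 /G2 !set2eq ?eqxx; dis. Qed.
Lemma g2_y_p : g2 y p = nyp.
Proof. by rewrite /g2 /G2 !set2eq ?eqxx; dis. Qed.
Lemma g2_z_v : g2 z v = nvz.
Proof. by rewrite /g2 /G2 !set2eq ?eqxx; dis. Qed.
Lemma g2_z_p : g2 z p = nzp.
Proof. by rewrite /g2 /G2 !set2eq ?eqxx; dis. Qed.
Lemma g2_z_w : g2 z w = nzw.
Proof. by rewrite /g2 /G2 !set2eq ?eqxx; dis. Qed.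
Lemma g2_w_v : g2 w v = nvw.
Proof. by rewrite /g2 /G2 !set2eq ?eqxx; dis. Qed.
Lemma g2_w_z : g2 w z = nzw.
Proof. by rewrite /g2 /G2 !set2eq ?eqxx; dis. Qed.
Lemma g2_w_t : g2 w t = ntw.
Proof. by rewrite /g2 /G2 !set2eq ?eqxx; dis. Qed.
Lemma g2_t_v : g2 t v = nvt.
Proof. by rewrite /g2 /G2 !set2eq ?eqxx; dis. Qed.
Lemma g2_t_w : g2 t w = ntw.
Proof. by rewrite /g2 /G2 !set2eq ?eqxx; dis. Qed.
Lemma g2_p_y : g2 p y = nyp.
Proof. by rewrite /g2 /G2 !set2eq ?eqxx; dis. Qed.
Lemma g2_p_z : g2 p z = nzp.
Proof. by rewrite /g2 /G2 !set2eq ?eqxx; dis. Qed.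
Lemma g2_v_out c : c \notin [:: x; u; y; z; w; t] -> g2 v c = g v c.
Proof. rewrite !inE => cL; nfacts; by rewrite /g2 /G2 !set2eq ?eqxx; dis. Qed.
Lemma g2_x_out c : c \notin [:: v; u] -> g2 x c = g x c.
Proof. rewrite !inE => cL; nfacts; by rewrite /g2 /G2 !set2eq ?eqxx; dis. Qed.
Lemma g2_u_out c : c \notin [:: v; x; y] -> g2 u c = g u c.
Proof. rewrite !inE => cL; nfacts; by rewrite /g2 /G2 !set2eq ?eqxx; dis. Qed.
Lemma g2_y_out c : c \notin [:: v; u; p] -> g2 y c = g y c.
Proof. rewrite !inE => cL; nfacts; by rewrite /g2 /G2 !set2eq ?eqxx; dis. Qed.
Lemma g2_z_out c : c \notin [:: v; p; w] -> g2 z c = g z c.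
Proof. rewrite !inE => cL; nfacts; by rewrite /g2 /G2 !set2eq ?eqxx; dis. Qed.
Lemma g2_w_out c : c \notin [:: v; z; t] -> g2 w c = g w c.
Proof. rewrite !inE => cL; nfacts; by rewrite /g2 /G2 !set2eq ?eqxx; dis. Qed.
Lemma g2_t_out c : c \notin [:: v; w] -> g2 t c = g t c.
Proof. rewrite !inE => cL; nfacts; by rewrite /g2 /G2 !set2eq ?eqxx; dis. Qed.
Lemma g2_p_out c : c \notin [:: y; z] -> g2 p c = g p c.
Proof. rewrite !inE => cL; nfacts; by rewrite /g2 /G2 !set2eq ?eqxx; dis. Qed.
Lemma g2_out a c : a \notin [:: v; x; u; y; z; w; t; p] -> g2 a c = g a c.
Proof. rewrite !inE => aL; nfacts; by rewrite /g2 /G2 !set2eq ?eqxx; dis; rewrite /= ?andbF. Qed.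
Lemma ee_v b c : adj v b -> adj v c -> b != c -> g2 v b != g2 v c.
Proof.
have uL : uniq [:: x; u; y; z; w; t] by rewrite /= !inE; dis.
apply: (@vtx_gen _ adj g2 g v [:: x; u; y; z; w; t] [:: nvx; nvu; nvy; nvz; nvw; nvt]) => //.
- by case=> [|[|[|[|[|[|i]]]]]] //= _; rewrite ?g2_v_x ?g2_v_u ?g2_v_y ?g2_v_z ?g2_v_w ?g2_v_t ?g2_x_v ?g2_x_u ?g2_u_v ?g2_u_x ?g2_u_y ?g2_y_v ?g2_y_u ?g2_y_p ?g2_z_v ?g2_z_p ?g2_z_w ?g2_w_v ?g2_w_z ?g2_w_t ?g2_t_v ?g2_t_w ?g2_p_y ?g2_p_z.
- by move=> c' cL _; apply: g2_v_out.
- move=> i c' iL cL ac; have /(all_nthP ord0) Hm := C2; have := Hm i iL.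
  move: (nth _ _ i) => m; rewrite !inE in cL; nfacts; rewrite !inE; repeat (case/orP; [move/eqP ->|]); try move/eqP ->; first [ done | (apply: Hal2; ad) | (rewrite eq_sym; apply: cve; ad) | (apply: cve; ad) | (apply: cee; [ad|ad|dis; done]) ].
- move=> c' d cL dL ac ad' cd; rewrite !inE in cL dL; nfacts; apply: cee => //; ad.
Qed.
Lemma fe_v b : adj v b -> f v != g2 v b.
Proof.
apply: (@vtx_fe _ adj g2 g v [:: x; u; y; z; w; t] [:: nvx; nvu; nvy; nvz; nvw; nvt]) => //.
- by case=> [|[|[|[|[|[|i]]]]]] //= _; rewrite ?g2_v_x ?g2_v_u ?g2_v_y ?g2_v_z ?g2_v_w ?g2_v_t ?g2_x_v ?g2_x_u ?g2_u_v ?g2_u_x ?g2_u_y ?g2_y_v ?g2_y_u ?g2_y_p ?g2_z_v ?g2_z_p ?g2_z_w ?g2_w_v ?g2_w_z ?g2_w_t ?g2_t_v ?g2_t_w ?g2_p_y ?g2_p_z.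
- by move=> c' cL _; apply: g2_v_out.
- move=> i iL; have /(all_nthP ord0) Hm := C2; have := Hm i iL.
  move: (nth _ _ i) => m; rewrite !inE; repeat (case/orP; [move/eqP ->|]); try move/eqP ->; first [ done | (apply: Hal2; ad) | (rewrite eq_sym; apply: cve; ad) | (apply: cve; ad) | (apply: cee; [ad|ad|dis; done]) ].
- move=> c' cL ac; rewrite !inE in cL; nfacts; apply: cve; ad.
Qed.
Lemma ee_x b c : adj x b -> adj x c -> b != c -> g2 x b != g2 x c.
Proof.
have uL : uniq [:: v; u] by rewrite /= !inE; dis.
have uV : uniq [:: nvx; nxu] by move: C9; rewrite /= !inE !negb_or => /andP [/andP [H _] _]; by rewrite /= H.
apply: (@vtx_gen _ adj g2 g x [:: v; u] [:: nvx; nxu]) => //.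
- by case=> [|[|i]] //= _; rewrite ?g2_v_x ?g2_v_u ?g2_v_y ?g2_v_z ?g2_v_w ?g2_v_t ?g2_x_v ?g2_x_u ?g2_u_v ?g2_u_x ?g2_u_y ?g2_y_v ?g2_y_u ?g2_y_p ?g2_z_v ?g2_z_p ?g2_z_w ?g2_w_v ?g2_w_z ?g2_w_t ?g2_t_v ?g2_t_w ?g2_p_y ?g2_p_z.
- by move=> c' cL _; apply: g2_x_out.
- move=> i c' iL cL ac; rewrite !inE in cL; nfacts.
  case/or3P: (Nx ac) => /eqP E; [by rewrite E eqxx in c0 | by rewrite E eqxx in c1 | subst c'].
  have C := C9; rewrite /= !inE in C; nfacts; by case: i iL => [|[|i]] //= _.
- move=> c' d cL dL ac ad' cd; rewrite !inE in cL dL; nfacts; apply: cee => //; ad.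
Qed.
Lemma ee_u b c : adj u b -> adj u c -> b != c -> g2 u b != g2 u c.
Proof.
have uL : uniq [:: v; x; y] by rewrite /= !inE; dis.
apply: (@vtx_gen _ adj g2 g u [:: v; x; y] [:: nvu; nxu; nyu]) => //.
- by case=> [|[|[|i]]] //= _; rewrite ?g2_v_x ?g2_v_u ?g2_v_y ?g2_v_z ?g2_v_w ?g2_v_t ?g2_x_v ?g2_x_u ?g2_u_v ?g2_u_x ?g2_u_y ?g2_y_v ?g2_y_u ?g2_y_p ?g2_z_v ?g2_z_p ?g2_z_w ?g2_w_v ?g2_w_z ?g2_w_t ?g2_t_v ?g2_t_w ?g2_p_y ?g2_p_z.
- by move=> c' cL _; apply: g2_u_out.
- move=> i c' iL cL ac; have /(all_nthP ord0) Hm := C4'; have := Hm i iL.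
  move: (nth _ _ i) => m; rewrite !inE in cL; nfacts; rewrite !inE; repeat (case/orP; [move/eqP ->|]); try move/eqP ->; first [ done | (apply: Hal2; ad) | (rewrite eq_sym; apply: cve; ad) | (apply: cve; ad) | (apply: cee; [ad|ad|dis; done]) ].
- move=> c' d cL dL ac ad' cd; rewrite !inE in cL dL; nfacts; apply: cee => //; ad.
Qed.
Lemma fe_u b : adj u b -> f u != g2 u b.
Proof.
apply: (@vtx_fe _ adj g2 g u [:: v; x; y] [:: nvu; nxu; nyu]) => //.
- by case=> [|[|[|i]]] //= _; rewrite ?g2_v_x ?g2_v_u ?g2_v_y ?g2_v_z ?g2_v_w ?g2_v_t ?g2_x_v ?g2_x_u ?g2_u_v ?g2_u_x ?g2_u_y ?g2_y_v ?g2_y_u ?g2_y_p ?g2_z_v ?g2_z_p ?g2_z_w ?g2_w_v ?g2_w_z ?g2_w_t ?g2_t_v ?g2_t_w ?g2_p_y ?g2_p_z.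
- by move=> c' cL _; apply: g2_u_out.
- move=> i iL; have /(all_nthP ord0) Hm := C4'; have := Hm i iL.
  move: (nth _ _ i) => m; rewrite !inE; repeat (case/orP; [move/eqP ->|]); try move/eqP ->; first [ done | (apply: Hal2; ad) | (rewrite eq_sym; apply: cve; ad) | (apply: cve; ad) | (apply: cee; [ad|ad|dis; done]) ].
- move=> c' cL ac; rewrite !inE in cL; nfacts; apply: cve; ad.
Qed.
Lemma ee_y b c : adj y b -> adj y c -> b != c -> g2 y b != g2 y c.
Proof.
have uL : uniq [:: v; u; p] by rewrite /= !inE; dis.
apply: (@vtx_gen _ adj g2 g y [:: v; u; p] [:: nvy; nyu; nyp]) => //.
- by case=> [|[|[|i]]] //= _; rewrite ?g2_v_x ?g2_v_u ?g2_v_y ?g2_v_z ?g2_v_w ?g2_v_t ?g2_x_v ?g2_x_u ?g2_u_v ?g2_u_x ?g2_u_y ?g2_y_v ?g2_y_u ?g2_y_p ?g2_z_v ?g2_z_p ?g2_z_w ?g2_w_v ?g2_w_z ?g2_w_t ?g2_t_v ?g2_t_w ?g2_p_y ?g2_p_z.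
- by move=> c' cL _; apply: g2_y_out.
- move=> i c' iL cL ac.
  by case/or3P: (Ny ac) => /eqP E; subst c'; move: cL; rewrite !inE eqxx ?orbT.
- move=> c' d cL dL ac ad' cd; rewrite !inE in cL dL; nfacts; apply: cee => //; ad.
Qed.
Lemma ee_z b c : adj z b -> adj z c -> b != c -> g2 z b != g2 z c.
Proof.
have uL : uniq [:: v; p; w] by rewrite /= !inE; dis.
apply: (@vtx_gen _ adj g2 g z [:: v; p; w] [:: nvz; nzp; nzw]) => //.
- by case=> [|[|[|i]]] //= _; rewrite ?g2_v_x ?g2_v_u ?g2_v_y ?g2_v_z ?g2_v_w ?g2_v_t ?g2_x_v ?g2_x_u ?g2_u_v ?g2_u_x ?g2_u_y ?g2_y_v ?g2_y_u ?g2_y_p ?g2_z_v ?g2_z_p ?g2_z_w ?g2_w_v ?g2_w_z ?g2_w_t ?g2_t_v ?g2_t_w ?g2_p_y ?g2_p_z.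
- by move=> c' cL _; apply: g2_z_out.
- move=> i c' iL cL ac.
  by case/or3P: (Nz ac) => /eqP E; subst c'; move: cL; rewrite !inE eqxx ?orbT.
- move=> c' d cL dL ac ad' cd; rewrite !inE in cL dL; nfacts; apply: cee => //; ad.
Qed.
Lemma ee_w b c : adj w b -> adj w c -> b != c -> g2 w b != g2 w c.
Proof.
have uL : uniq [:: v; z; t] by rewrite /= !inE; dis.
apply: (@vtx_gen _ adj g2 g w [:: v; z; t] [:: nvw; nzw; ntw]) => //.
- by case=> [|[|[|i]]] //= _; rewrite ?g2_v_x ?g2_v_u ?g2_v_y ?g2_v_z ?g2_v_w ?g2_v_t ?g2_x_v ?g2_x_u ?g2_u_v ?g2_u_x ?g2_u_y ?g2_y_v ?g2_y_u ?g2_y_p ?g2_z_v ?g2_z_p ?g2_z_w ?g2_w_v ?g2_w_z ?g2_w_t ?g2_t_v ?g2_t_w ?g2_p_y ?g2_p_z.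
- by move=> c' cL _; apply: g2_w_out.
- move=> i c' iL cL ac; have /(all_nthP ord0) Hm := C6'; have := Hm i iL.
  move: (nth _ _ i) => m; rewrite !inE in cL; nfacts; rewrite !inE; repeat (case/orP; [move/eqP ->|]); try move/eqP ->; first [ done | (apply: Hal2; ad) | (rewrite eq_sym; apply: cve; ad) | (apply: cve; ad) | (apply: cee; [ad|ad|dis; done]) ].
- move=> c' d cL dL ac ad' cd; rewrite !inE in cL dL; nfacts; apply: cee => //; ad.
Qed.
Lemma fe_w b : adj w b -> f w != g2 w b.
Proof.
apply: (@vtx_fe _ adj g2 g w [:: v; z; t] [:: nvw; nzw; ntw]) => //.
- by case=> [|[|[|i]]] //= _; rewrite ?g2_v_x ?g2_v_u ?g2_v_y ?g2_v_z ?g2_v_w ?g2_v_t ?g2_x_v ?g2_x_u ?g2_u_v ?g2_u_x ?g2_u_y ?g2_y_v ?g2_y_u ?g2_y_p ?g2_z_v ?g2_z_p ?g2_z_w ?g2_w_v ?g2_w_z ?g2_w_t ?g2_t_v ?g2_t_w ?g2_p_y ?g2_p_z.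
- by move=> c' cL _; apply: g2_w_out.
- move=> i iL; have /(all_nthP ord0) Hm := C6'; have := Hm i iL.
  move: (nth _ _ i) => m; rewrite !inE; repeat (case/orP; [move/eqP ->|]); try move/eqP ->; first [ done | (apply: Hal2; ad) | (rewrite eq_sym; apply: cve; ad) | (apply: cve; ad) | (apply: cee; [ad|ad|dis; done]) ].
- move=> c' cL ac; rewrite !inE in cL; nfacts; apply: cve; ad.
Qed.
Lemma ee_t b c : adj t b -> adj t c -> b != c -> g2 t b != g2 t c.
Proof.
have uL : uniq [:: v; w] by rewrite /= !inE; dis.
have uV : uniq [:: nvt; ntw] by move: C12; rewrite /= !inE !negb_or => /andP [/andP [H _] _]; by rewrite /= H.
apply: (@vtx_gen _ adj g2 g t [:: v; w] [:: nvt; ntw]) => //.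
- by case=> [|[|i]] //= _; rewrite ?g2_v_x ?g2_v_u ?g2_v_y ?g2_v_z ?g2_v_w ?g2_v_t ?g2_x_v ?g2_x_u ?g2_u_v ?g2_u_x ?g2_u_y ?g2_y_v ?g2_y_u ?g2_y_p ?g2_z_v ?g2_z_p ?g2_z_w ?g2_w_v ?g2_w_z ?g2_w_t ?g2_t_v ?g2_t_w ?g2_p_y ?g2_p_z.
- by move=> c' cL _; apply: g2_t_out.
- move=> i c' iL cL ac; rewrite !inE in cL; nfacts.
  case/or3P: (Nt ac) => /eqP E; [by rewrite E eqxx in c0 | by rewrite E eqxx in c1 | subst c'].
  have C := C12; rewrite /= !inE in C; nfacts; by case: i iL => [|[|i]] //= _.
- move=> c' d cL dL ac ad' cd; rewrite !inE in cL dL; nfacts; apply: cee => //; ad.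
Qed.
Lemma ee_p b c : adj p b -> adj p c -> b != c -> g2 p b != g2 p c.
Proof.
have uL : uniq [:: y; z] by rewrite /= !inE; dis.
apply: (@vtx_gen _ adj g2 g p [:: y; z] [:: nyp; nzp]) => //.
- by case=> [|[|i]] //= _; rewrite ?g2_v_x ?g2_v_u ?g2_v_y ?g2_v_z ?g2_v_w ?g2_v_t ?g2_x_v ?g2_x_u ?g2_u_v ?g2_u_x ?g2_u_y ?g2_y_v ?g2_y_u ?g2_y_p ?g2_z_v ?g2_z_p ?g2_z_w ?g2_w_v ?g2_w_z ?g2_w_t ?g2_t_v ?g2_t_w ?g2_p_y ?g2_p_z.
- by move=> c' cL _; apply: g2_p_out.
- move=> i c' iL cL ac; have /(all_nthP ord0) Hm := C8; have := Hm i iL.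
  move: (nth _ _ i) => m; rewrite !inE in cL; nfacts; rewrite !inE; repeat (case/orP; [move/eqP ->|]); try move/eqP ->; first [ done | (apply: Hal2; ad) | (rewrite eq_sym; apply: cve; ad) | (apply: cve; ad) | (apply: cee; [ad|ad|dis; done]) ].
- move=> c' d cL dL ac ad' cd; rewrite !inE in cL dL; nfacts; apply: cee => //; ad.
Qed.
Lemma fe_p b : adj p b -> f p != g2 p b.
Proof.
apply: (@vtx_fe _ adj g2 g p [:: y; z] [:: nyp; nzp]) => //.
- by case=> [|[|i]] //= _; rewrite ?g2_v_x ?g2_v_u ?g2_v_y ?g2_v_z ?g2_v_w ?g2_v_t ?g2_x_v ?g2_x_u ?g2_u_v ?g2_u_x ?g2_u_y ?g2_y_v ?g2_y_u ?g2_y_p ?g2_z_v ?g2_z_p ?g2_z_w ?g2_w_v ?g2_w_z ?g2_w_t ?g2_t_v ?g2_t_w ?g2_p_y ?g2_p_z.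
- by move=> c' cL _; apply: g2_p_out.
- move=> i iL; have /(all_nthP ord0) Hm := C8; have := Hm i iL.
  move: (nth _ _ i) => m; rewrite !inE; repeat (case/orP; [move/eqP ->|]); try move/eqP ->; first [ done | (apply: Hal2; ad) | (rewrite eq_sym; apply: cve; ad) | (apply: cve; ad) | (apply: cee; [ad|ad|dis; done]) ].
- move=> c' cL ac; rewrite !inE in cL; nfacts; apply: cve; ad.
Qed.
Lemma ee_gen a b c : a \notin [:: v; x; u; y; z; w; t; p] -> adj a b -> adj a c -> b != c -> g2 a b != g2 a c.
Proof.
move=> aL; apply: (@vtx_gen _ adj g2 g a [::] [::]) => //.
- by move=> c' _ _; apply: g2_out.
- by move=> c' d _ _ ac ad' cd; rewrite !inE in aL; nfacts; apply: cee => //; ad.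
Qed.
Lemma fe_gen a b : a \notin [:: v; x; u; y; z; w; t; p] -> adj a b -> f a != g2 a b.
Proof.
move=> aL ab; rewrite g2_out //; rewrite !inE in aL; nfacts; apply: cve; ad.
Qed.

Lemma good : good_except adj [:: x; y; z; t] f g2.
Proof.
split; [|split; [|split]].
- move=> a b ab; rewrite /g2 [[set b; a]]setUC.
  case: (boolP ([set a; b] == [set v; y])) => [/eqP E|H].
  + by rewrite E /G2 !set2eq ?eqxx; dis.
  + by rewrite (@cs a b) // /adjd ab H.
- move=> a b ab aS bS; apply: cvv; apply: adjd_of => //.
  rewrite !inE in aS bS; nfacts; dis; by rewrite ?andbF ?andFb.
- move=> a b ab aS.
  case: (eqVneq a v) => [E|av]; first by subst a; apply: fe_v.
  case: (eqVneq a u) => [E|au]; first by subst a; apply: fe_u.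
  case: (eqVneq a w) => [E|aw]; first by subst a; apply: fe_w.
  case: (eqVneq a p) => [E|ap]; first by subst a; apply: fe_p.
  apply: fe_gen => //; rewrite !inE in aS |- *; nfacts; by dis.
- move=> a b c ab ac bc.
  case: (eqVneq a v) => [E|av]; first by subst a; apply: ee_v.
  case: (eqVneq a u) => [E|au]; first by subst a; apply: ee_u.
  case: (eqVneq a w) => [E|aw]; first by subst a; apply: ee_w.
  case: (eqVneq a p) => [E|ap]; first by subst a; apply: ee_p.
  case: (eqVneq a x) => [E|ax]; first by subst a; apply: ee_x.
  case: (eqVneq a y) => [E|ay]; first by subst a; apply: ee_y.
  case: (eqVneq a z) => [E|az]; first by subst a; apply: ee_z.
  case: (eqVneq a t) => [E|a_t]; first by subst a; apply: ee_t.
  apply: ee_gen => //; rewrite !inE; by dis.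
Qed.

End New.

Lemma extend : total_colorable adj 9.
Proof.
have [al [Hal Hal2]] := free_v.
have vu : v != u by rewrite n_v_u.
have vw : v != w by rewrite n_v_w.
have axv : adj x v by rewrite sym.
have atv : adj t v by rewrite sym.
have ayv : adj y v by rewrite sym.
have azv : adj z v by rewrite sym.
have ayu : adj y u by rewrite sym.
have atw : adj t w by rewrite sym.
have ayp : adj y p by rewrite sym.
have azp : adj z p by rewrite sym.
have [x' [axx x'v x'u Nx]] := nb3 dx axv axu vu.
have [t' [att t'v t'w Nt]] := nb3 dt atv atw vw.
have [y' [ayy _ _ Ny0]] := nb3 dy ayv ayu vu.
have [z' [azz _ _ Nz0]] := nb3 dz azv azw vw.
have Ny : forall d, adj y d -> [|| d == v, d == u | d == p].
  move=> d yd; have := Ny0 d yd; have := Ny0 p ayp; rewrite n_p_v n_p_u /= => /eqP <-.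
  by [].
have Nz : forall d, adj z d -> [|| d == v, d == w | d == p].
  move=> d zd; have := Nz0 d zd; have := Nz0 p azp; rewrite n_p_v n_p_w /= => /eqP <-.
  by [].
have dvx : adjd adj v y v x by ad.
have dvu : adjd adj v y v u by ad.
have dvz : adjd adj v y v z by ad.
have dvw : adjd adj v y v w by ad.
have dvt : adjd adj v y v t by ad.
have dux : adjd adj v y u x by ad.
have duy : adjd adj v y u y by ad.
have dpy : adjd adj v y p y by ad.
have dpz : adjd adj v y p z by ad.
have dwz : adjd adj v y w z by ad.
have dwt : adjd adj v y w t by ad.
have dxx : adjd adj v y x x' by ad.
have dtt : adjd adj v y t t' by ad.
have H1 : uniq [:: al; g v x; g v u; g v z; g v w; g v t].
  change (uniq (al :: map (g v) [:: x; u; z; w; t])).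
  rewrite cons_uniq uniq_gs; last by rewrite /= !inE; dis.
  - rewrite andbT; apply/mapP => -[r rL E].
    have Ar : all (adjd adj v y v) [:: x; u; z; w; t] by rewrite /= dvx dvu dvz dvw dvt.
    by move: (Hal2 r (allP Ar r rL)); rewrite E eqxx.
  - by rewrite /= dvx dvu dvz dvw dvt.
have H2 : uniq [:: g v u; g u x; g u y].
  rewrite (cs dvu); change (uniq (map (g u) [:: v; x; y])).
  apply: uniq_gs; last by rewrite /= !inE; dis.
  by rewrite /= dux duy /= andbT; ad.
have H3 : uniq [:: g v w; g w z; g w t].
  rewrite (cs dvw); change (uniq (map (g w) [:: v; z; t])).
  apply: uniq_gs; last by rewrite /= !inE; dis.
  by rewrite /= dwz dwt /= andbT; ad.
have H4 : g p y != g p z by apply: cee => //; rewrite n_y_z.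
have H5 : uniq [:: g v x; g u x; g x x'].
  rewrite (cs dvx) (cs dux); change (uniq (map (g x) [:: v; u; x'])).
  apply: uniq_gs; last by rewrite /= !inE !negb_or vu (eq_sym v x') x'v (eq_sym u x') x'u.
  by rewrite /= dxx /= andbT; apply/andP; split; ad.
have H6 : g u y != g p y.
  by rewrite (cs duy) (cs dpy); apply: cee; [ad | ad | rewrite n_u_p].
have H7 : uniq [:: g v z; g p z; g w z].
  rewrite (cs dvz) (cs dpz) (cs dwz); change (uniq (map (g z) [:: v; p; w])).
  apply: uniq_gs; last by rewrite /= !inE; dis.
  by rewrite /=; apply/and4P; split=> //; ad.
have H8 : uniq [:: g v t; g w t; g t t'].
  rewrite (cs dvt) (cs dwt); change (uniq (map (g t) [:: v; w; t'])).
  apply: uniq_gs; last by rewrite /= !inE !negb_or vw (eq_sym v t') t'v (eq_sym w t') t'w.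
  by rewrite /= dtt /= andbT; apply/andP; split; ad.
have [nvx [nvy [nvz [nvt [nvu [nvw [nxu [nyu [nzw [ntw [nyp [nzp Hb]]]]]]]]]]]] :=
  local_sol H1 H2 H3 H4 H5 H6 H7 H8.
move: Hb => /andP[/andP[/andP[/andP[/andP[/andP[/andP[/andP[/andP[/andP[/andP[C1 C2] C3] C4] C5] C6] C7] C8] C9] C10] C11] C12].
have G := good Hal Hal2 Nx Nt Ny Nz C1 C2 C3 C4 C5 C6 C7 C8 C9 C10 C11 C12.
have [f1 G1] := recolor irr sym dx G.
have [f2 G2] := recolor irr sym dy G1.
have [f3 G3] := recolor irr sym dz G2.
have [f4 G4] := recolor irr sym dt G3.
by exists f4, (g2 nvx nvy nvz nvt nvu nvw nxu nyu nzw ntw nyp nzp); apply: good_total.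
Qed.

End Ext.

Theorem lemma2p12 (T : finType) (adj : rel T) :
  minimal_counterexample adj ->
  ~ (exists v x u y z w t p : T,
       deg adj v = 8 /\
       uniq [:: x; u; y; z; w; t] /\
       adj v x /\ adj v u /\ adj v y /\ adj v z /\ adj v w /\ adj v t /\
       p \notin [:: v; x; u; y; z; w; t] /\
       adj x u /\ adj u y /\ adj z w /\ adj w t /\
       adj p y /\ adj p z /\
       deg adj x = 3 /\ deg adj y = 3 /\ deg adj z = 3 /\ deg adj t = 3).
Proof.
move=> M [v [x [u [y [z [w [t [p [dv [U6 [avx [avu [avy [avz [avw [avt [pn
  [axu [auy [azw [awt [apy [apz [dx [dy [dz dt]]]]]]]]]]]]]]]]]]]]]]]]]].
have [[irr sym] [_ [_ [_ [nc _]]]]] := M.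
have [f [g col]] := del_colorable M avy.
apply: nc.
exact: (extend irr sym U6 avx avu avy avz avw avt pn axu auy azw awt apy apz dx dy dz dt dv col).
Qed.
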